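(* Let $\psi_0(x,t)$ be a classical solution of $\mathrm{i}\psi_t+\tfrac12\psi_{xx}+(|\psi|^2-1)\psi=0$ on $\mathbb{R}^2$, let $\zeta\in\mathbb{C}$, and let $\mathbf{u}^{[a]}(x,t)$, $\mathbf{u}^{[b]}(x,t)$ be (not necessarily distinct) $\mathbb{C}^2$-valued simultaneous solutions of $\mathbf{u}_x=\begin{bmatrix}-\mathrm{i}\zeta&\psi_0\\-\psi_0^*&\mathrm{i}\zeta\end{bmatrix}\mathbf{u}$ and $\mathbf{u}_t=\begin{bmatrix}-\mathrm{i}\zeta^2+\frac{\mathrm{i}}2(|\psi_0|^2-1)&\zeta\psi_0+\frac{\mathrm{i}}2\psi_{0x}\\-\zeta\psi_0^*+\frac{\mathrm{i}}2\psi_{0x}^*&\mathrm{i}\zeta^2-\frac{\mathrm{i}}2(|\psi_0|^2-1)\end{bmatrix}\mathbf{u}$. Then for every $C\in\mathbb{C}$ the function $$\psi_1(x,t)=C\,u^{[a]}_1u^{[b]}_1-C^*\,\big(u^{[a]}_2u^{[b]}_2\big)^*$$ solves the linearized NLS equation $\mathrm{i}\psi_{1t}+\tfrac12\psi_{1xx}+(2|\psi_0|^2-1)\psi_1+\psi_0^2\psi_1^*=0$. In particular $\mu^{[ab]}=u^{[a]}_1u^{[b]}_1-(u^{[a]}_2u^{[b]}_2)^*$ ($C=1$) and $\nu^{[ab]}=\mathrm{i}u^{[a]}_1u^{[b]}_1+\mathrm{i}(u^{[a]}_2u^{[b]}_2)^*$ ($C=\mathrm{i}$) are solutions.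
   Context: $^*$ denotes complex conjugation; $u_j$ denotes the $j$-th component of $\mathbf{u}$. *)

(* Defs.v *)
From Stdlib Require Import Reals.
Open Scope R_scope.

Definition Cx : Type := (R * R)%type.
Definition Cre (z : Cx) : R := fst z.
Definition Cim (z : Cx) : R := snd z.
Definition RtoC (a : R) : Cx := (a, 0).
Definition C0 : Cx := (0, 0).
Definition Ci : Cx := (0, 1).
Definition Cadd (z w : Cx) : Cx := (fst z + fst w, snd z + snd w).
Definition Copp (z : Cx) : Cx := (- fst z, - snd z).
Definition Csub (z w : Cx) : Cx := Cadd z (Copp w).
Definition Cmul (z w : Cx) : Cx :=
  (fst z * fst w - snd z * snd w, fst z * snd w + snd z * fst w).
Definition Cconj (z : Cx) : Cx := (fst z, - snd z).
Definition Cabs2 (z : Cx) : Cx := RtoC (fst z * fst z + snd z * snd z).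

Definition has_dx (f g : R -> R -> Cx) : Prop :=
  forall x t,
    derivable_pt_lim (fun s => fst (f s t)) x (fst (g x t)) /\
    derivable_pt_lim (fun s => snd (f s t)) x (snd (g x t)).
Definition has_dt (f g : R -> R -> Cx) : Prop :=
  forall x t,
    derivable_pt_lim (fun s => fst (f x s)) t (fst (g x t)) /\
    derivable_pt_lim (fun s => snd (f x s)) t (snd (g x t)).

Definition NLS_classical (psi psix psixx psit : R -> R -> Cx) : Prop :=
  has_dx psi psix /\ has_dx psix psixx /\ has_dt psi psit /\
  forall x t,
    Cadd (Cadd (Cmul Ci (psit x t)) (Cmul (RtoC (1/2)) (psixx x t)))
         (Cmul (Csub (Cabs2 (psi x t)) (RtoC 1)) (psi x t)) = C0.

Definition lax_solution (zeta : Cx) (psi psix : R -> R -> Cx)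
    (u1 u2 : R -> R -> Cx) : Prop :=
  has_dx u1 (fun x t => Cadd (Cmul (Copp (Cmul Ci zeta)) (u1 x t))
                             (Cmul (psi x t) (u2 x t))) /\
  has_dx u2 (fun x t => Cadd (Cmul (Copp (Cconj (psi x t))) (u1 x t))
                             (Cmul (Cmul Ci zeta) (u2 x t))) /\
  has_dt u1 (fun x t =>
    Cadd (Cmul (Cadd (Copp (Cmul Ci (Cmul zeta zeta)))
                     (Cmul (Cmul Ci (RtoC (1/2)))
                           (Csub (Cabs2 (psi x t)) (RtoC 1)))) (u1 x t))
         (Cmul (Cadd (Cmul zeta (psi x t))
                     (Cmul (Cmul Ci (RtoC (1/2))) (psix x t))) (u2 x t))) /\
  has_dt u2 (fun x t =>
    Cadd (Cmul (Cadd (Copp (Cmul zeta (Cconj (psi x t))))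
                     (Cmul (Cmul Ci (RtoC (1/2))) (Cconj (psix x t)))) (u1 x t))
         (Cmul (Csub (Cmul Ci (Cmul zeta zeta))
                     (Cmul (Cmul Ci (RtoC (1/2)))
                           (Csub (Cabs2 (psi x t)) (RtoC 1)))) (u2 x t))).

Definition LNLS_classical (psi0 psi1 : R -> R -> Cx) : Prop :=
  exists psi1x psi1xx psi1t : R -> R -> Cx,
    has_dx psi1 psi1x /\ has_dx psi1x psi1xx /\ has_dt psi1 psi1t /\
    forall x t,
      Cadd (Cadd (Cadd (Cmul Ci (psi1t x t)) (Cmul (RtoC (1/2)) (psi1xx x t)))
                 (Cmul (Csub (Cmul (RtoC 2) (Cabs2 (psi0 x t))) (RtoC 1)) (psi1 x t)))
           (Cmul (Cmul (psi0 x t) (psi0 x t)) (Cconj (psi1 x t))) = C0.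

(* Main.v *)
Require Import Defs.
From Stdlib Require Import Reals Lra.
Open Scope R_scope.

Lemma dl_eq f x l l' : derivable_pt_lim f x l -> l = l' -> derivable_pt_lim f x l'.
Proof. intros H ->; exact H. Qed.
Lemma dl_mul f g x a b : derivable_pt_lim f x a -> derivable_pt_lim g x b ->
  derivable_pt_lim (fun s => f s * g s) x (a * g x + f x * b).
Proof. intros; exact (derivable_pt_lim_mult f g x a b H H0). Qed.
Lemma dl_add f g x a b : derivable_pt_lim f x a -> derivable_pt_lim g x b ->
  derivable_pt_lim (fun s => f s + g s) x (a + b).
Proof. intros; exact (derivable_pt_lim_plus f g x a b H H0). Qed.
Lemma dl_sub f g x a b : derivable_pt_lim f x a -> derivable_pt_lim g x b ->
  derivable_pt_lim (fun s => f s - g s) x (a - b).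
Proof. intros; exact (derivable_pt_lim_minus f g x a b H H0). Qed.
Lemma dl_opp f x a : derivable_pt_lim f x a ->
  derivable_pt_lim (fun s => - f s) x (- a).
Proof. intros; exact (derivable_pt_lim_opp f x a H). Qed.
Lemma dl_const k x : derivable_pt_lim (fun _ => k) x 0.
Proof. exact (derivable_pt_lim_const k x). Qed.


Lemma dx_mul f g f' g' : has_dx f f' -> has_dx g g' ->
  has_dx (fun x t => Cmul (f x t) (g x t))
    (fun x t => Cadd (Cmul (f' x t) (g x t)) (Cmul (f x t) (g' x t))).
Proof.
  intros Hf Hg x t; destruct (Hf x t) as [f1 f2]; destruct (Hg x t) as [g1 g2];
  unfold Cmul, Cadd; simpl; split.
  - eapply dl_eq; [apply dl_sub; apply dl_mul; eassumption|cbv beta; ring].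
  - eapply dl_eq; [apply dl_add; apply dl_mul; eassumption|cbv beta; ring].
Qed.
Lemma dx_add f g f' g' : has_dx f f' -> has_dx g g' ->
  has_dx (fun x t => Cadd (f x t) (g x t)) (fun x t => Cadd (f' x t) (g' x t)).
Proof.
  intros Hf Hg x t; destruct (Hf x t) as [f1 f2]; destruct (Hg x t) as [g1 g2];
  unfold Cadd; simpl; split; apply dl_add; assumption.
Qed.
Lemma dx_opp f f' : has_dx f f' ->
  has_dx (fun x t => Copp (f x t)) (fun x t => Copp (f' x t)).
Proof.
  intros Hf x t; destruct (Hf x t) as [f1 f2]; unfold Copp; simpl; split; apply dl_opp; assumption.
Qed.
Lemma dx_sub f g f' g' : has_dx f f' -> has_dx g g' ->
  has_dx (fun x t => Csub (f x t) (g x t)) (fun x t => Csub (f' x t) (g' x t)).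
Proof. intros; unfold Csub; apply dx_add; [|apply dx_opp]; assumption. Qed.
Lemma dx_conj f f' : has_dx f f' ->
  has_dx (fun x t => Cconj (f x t)) (fun x t => Cconj (f' x t)).
Proof.
  intros Hf x t; destruct (Hf x t) as [f1 f2]; unfold Cconj; simpl; split; [|apply dl_opp]; assumption.
Qed.
Lemma dx_const k : has_dx (fun _ _ => k) (fun _ _ => C0).
Proof. intros x t; split; apply dl_const. Qed.

Lemma dt_mul f g f' g' : has_dt f f' -> has_dt g g' ->
  has_dt (fun x t => Cmul (f x t) (g x t))
    (fun x t => Cadd (Cmul (f' x t) (g x t)) (Cmul (f x t) (g' x t))).
Proof.
  intros Hf Hg x t; destruct (Hf x t) as [f1 f2]; destruct (Hg x t) as [g1 g2];
  unfold Cmul, Cadd; simpl; split.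
  - eapply dl_eq; [apply dl_sub; apply dl_mul; eassumption|cbv beta; ring].
  - eapply dl_eq; [apply dl_add; apply dl_mul; eassumption|cbv beta; ring].
Qed.
Lemma dt_add f g f' g' : has_dt f f' -> has_dt g g' ->
  has_dt (fun x t => Cadd (f x t) (g x t)) (fun x t => Cadd (f' x t) (g' x t)).
Proof.
  intros Hf Hg x t; destruct (Hf x t) as [f1 f2]; destruct (Hg x t) as [g1 g2];
  unfold Cadd; simpl; split; apply dl_add; assumption.
Qed.
Lemma dt_opp f f' : has_dt f f' ->
  has_dt (fun x t => Copp (f x t)) (fun x t => Copp (f' x t)).
Proof.
  intros Hf x t; destruct (Hf x t) as [f1 f2]; unfold Copp; simpl; split; apply dl_opp; assumption.
Qed.
Lemma dt_sub f g f' g' : has_dt f f' -> has_dt g g' ->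
  has_dt (fun x t => Csub (f x t) (g x t)) (fun x t => Csub (f' x t) (g' x t)).
Proof. intros; unfold Csub; apply dt_add; [|apply dt_opp]; assumption. Qed.
Lemma dt_conj f f' : has_dt f f' ->
  has_dt (fun x t => Cconj (f x t)) (fun x t => Cconj (f' x t)).
Proof.
  intros Hf x t; destruct (Hf x t) as [f1 f2]; unfold Cconj; simpl; split; [|apply dl_opp]; assumption.
Qed.
Lemma dt_const k : has_dt (fun _ _ => k) (fun _ _ => C0).
Proof. intros x t; split; apply dl_const. Qed.


Definition C1 : Cx := RtoC 1.
Lemma Cring : ring_theory C0 C1 Cadd Cmul Csub Copp (@eq Cx).
Proof.
  constructor; intros; repeat match goal with z : Cx |- _ => destruct z | z : (R*R)%type |- _ => destruct z end;
  unfold Csub, C0, C1, RtoC, Cadd, Cmul, Copp; simpl; f_equal; ring.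
Qed.
Add Ring Cx_ring : Cring.

Lemma cj_add a b : Cconj (Cadd a b) = Cadd (Cconj a) (Cconj b).
Proof. destruct a, b; unfold Cconj, Cadd; simpl; f_equal; ring. Qed.
Lemma cj_mul a b : Cconj (Cmul a b) = Cmul (Cconj a) (Cconj b).
Proof. destruct a, b; unfold Cconj, Cmul; simpl; f_equal; ring. Qed.
Lemma cj_opp a : Cconj (Copp a) = Copp (Cconj a).
Proof. destruct a; unfold Cconj, Copp; simpl; f_equal; ring. Qed.
Lemma cj_sub a b : Cconj (Csub a b) = Csub (Cconj a) (Cconj b).
Proof. unfold Csub; rewrite cj_add, cj_opp; reflexivity. Qed.
Lemma cj_cj a : Cconj (Cconj a) = a.
Proof. destruct a; unfold Cconj; simpl; f_equal; ring. Qed.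
Lemma cj_i : Cconj Ci = Copp Ci.
Proof. unfold Cconj, Ci, Copp; simpl; f_equal; ring. Qed.
Lemma cj_r r : Cconj (RtoC r) = RtoC r.
Proof. unfold Cconj, RtoC; simpl; f_equal; ring. Qed.
Lemma cj_0 : Cconj C0 = C0.
Proof. unfold Cconj, C0; simpl; f_equal; ring. Qed.
Lemma abs2_eq z : Cabs2 z = Cmul z (Cconj z).
Proof. destruct z; unfold Cabs2, Cmul, Cconj, RtoC; simpl; f_equal; ring. Qed.
Lemma C0_eq z : fst z = 0 -> snd z = 0 -> z = C0.
Proof. destruct z; simpl; intros -> ->; reflexivity. Qed.
Lemma r1 : RtoC 1 = C1.
Proof. reflexivity. Qed.

Ltac dxs := repeat first [ apply dx_const | apply dx_sub | apply dx_add | apply dx_opp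
  | apply dx_mul | apply dx_conj | eassumption ].
Ltac dts := repeat first [ apply dt_const | apply dt_sub | apply dt_add | apply dt_opp
  | apply dt_mul | apply dt_conj | eassumption ].

Theorem mainTheorem13
  (psi0 psi0x psi0xx psi0t : R -> R -> Cx) (zeta : Cx)
  (ua1 ua2 ub1 ub2 : R -> R -> Cx)
  (Hpsi0 : NLS_classical psi0 psi0x psi0xx psi0t)
  (Ha : lax_solution zeta psi0 psi0x ua1 ua2)
  (Hb : lax_solution zeta psi0 psi0x ub1 ub2) :
  forall c : Cx,
    LNLS_classical psi0
      (fun x t => Csub (Cmul c (Cmul (ua1 x t) (ub1 x t)))
                       (Cmul (Cconj c) (Cconj (Cmul (ua2 x t) (ub2 x t))))).
Proof.
  intro c.
  destruct Hpsi0 as [H0x [_ _]].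
  destruct Ha as [Ha1x [Ha2x [Ha1t Ha2t]]].
  destruct Hb as [Hb1x [Hb2x [Hb1t Hb2t]]].
  unfold LNLS_classical.
  eexists ?[px], ?[pxx], ?[pt].
  split; [dxs|]. split; [dxs|]. split; [dts|].
  abstract (intros x t;
  cbv beta;
  generalize (ua1 x t) (ua2 x t) (ub1 x t) (ub2 x t) (psi0 x t) (psi0x x t);
  intros A1 A2 B1 B2 P Q;
  destruct A1, A2, B1, B2, P, Q, zeta, c;
  apply C0_eq;
  cbv [Cadd Cmul Csub Copp Cconj Cabs2 RtoC Ci C0 C1 fst snd]; field).
Qed.
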